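(* Let $a,b,c$ be positive integers and $r=[2a,2b,-2c]$. Then all zeros of $\Delta_{K(r)}(t)$ are real if and only if $a\ge c$.
   Context: For a finite sequence $r=[2a_1,2a_2,\dots,2a_n]$ of nonzero even integers, $K(r)$ denotes the 2-bridge knot or link whose associated rational number has the even continued fraction expansion $1/(2a_1-1/(2a_2-\cdots-1/(2a_n)))$ ($K(r)$ is a knot if $n$ is even and a 2-component link if $n$ is odd). Let $M(r)$ be the $n\times n$ integer matrix whose $(k,k)$-entry is $a_k$ ($1\le k\le n$), whose $(k,k+1)$-entry is $1$ ($1\le k\le n-1$), and whose other entries are $0$; it is a Seifert matrix of $K(r)$, and $\Delta_{K(r)}(t)=\det(tM(r)-M(r)^T)$ is the (reduced) Alexander polynomial of $K(r)$ (well defined up to sign). *)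

(* Defs.v *)
From HB Require Import structures.
From mathcomp Require Import all_boot all_order all_algebra all_field.
Set Implicit Arguments. Unset Strict Implicit. Unset Printing Implicit Defensive.
Import Order.TTheory GRing.Theory Num.Theory.
Local Open Scope ring_scope.

(* r = [2a_1; ...; 2a_n] : a sequence of nonzero even integers.
   seifert_mx r = M(r): (k,k)-entry a_k = r_k / 2, (k,k+1)-entry 1, else 0. *)
Definition seifert_mx (r : seq int) : 'M[int]_(size r) :=
  \matrix_(i < size r, j < size r)
    (if i == j then (r`_i %/ 2)%Z
     else if (j == i.+1 :> nat) then 1 else 0).

Definition alexander_poly (r : seq int) : {poly int} :=
  \det (\matrix_(i < size r, j < size r)
          ('X * (seifert_mx r i j)%:P - (seifert_mx r j i)%:P)).

Definition alexander_polyC (r : seq int) : {poly algC} :=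
  map_poly (fun z : int => z%:~R) (alexander_poly r).

(* Main.v *)
Require Import Defs.
From HB Require Import structures.
From mathcomp Require Import all_boot all_order all_algebra all_field.
From mathcomp Require Import ring.
Import Order.TTheory GRing.Theory Num.Theory.
Local Open Scope ring_scope.

Lemma det3 (R : comNzRingType) (f : nat -> nat -> R) :
  \det (\matrix_(i < 3, j < 3) f i j) = f 0%N 0%N * (f 1%N 1%N * f 2%N 2%N - f 1%N 2%N * f 2%N 1%N)
         - f 0%N 1%N * (f 1%N 0%N * f 2%N 2%N - f 1%N 2%N * f 2%N 0%N)
         + f 0%N 2%N * (f 1%N 0%N * f 2%N 1%N - f 1%N 1%N * f 2%N 0%N).
Proof.
rewrite (expand_det_row _ 0) !big_ord_recl big_ord0 /cofactor.
rewrite !(expand_det_row _ 0) !big_ord_recl !big_ord0 /cofactor.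
rewrite !(expand_det_row _ 0) !big_ord_recl !big_ord0 /cofactor.
rewrite !det_mx00 /= !mxE /=.
rewrite /bump /=. ring.
Qed.

Lemma alex_eq (a b c : nat) :
  alexander_poly [:: 2 * a%:Z; 2 * b%:Z; - (2 * c%:Z)] =
  ('X - 1) * ((a%:Z - c%:Z)%:P * 'X - (a%:Z * b%:Z * c%:Z)%:P * ('X - 1) ^+ 2).
Proof.
rewrite /alexander_poly.
set r := [:: _; _; _].
pose g (i j : nat) : int := if i == j then (r`_i %/ 2)%Z else if j == i.+1 then 1 else 0.
have -> : (\matrix_(i < size r, j < size r)
          ('X * (seifert_mx r i j)%:P - (seifert_mx r j i)%:P))
   = \matrix_(i < 3, j < 3) ('X * (g i j)%:P - (g j i)%:P).
  by apply/matrixP => i j; rewrite !mxE.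
change (size r) with 3%N.
rewrite (@det3 _ (fun i j => 'X * (g i j)%:P - (g j i)%:P)) /g /=.
rewrite -mulrN !mulKz //.
rewrite !(polyCB, polyCM, polyCN) ?polyC1 ?polyC0.
ring.
Qed.

Lemma rootE (a b c : nat) (z : algC) :
  root (alexander_polyC [:: 2 * a%:Z; 2 * b%:Z; - (2 * c%:Z)]) z =
  ((z - 1) * ((a%:R - c%:R) * z - (a * b * c)%:R * (z - 1) ^+ 2) == 0).
Proof.
rewrite /alexander_polyC alex_eq /root.
rewrite !(rmorphM, rmorphB, rmorphXn) /= map_polyX rmorph1 !map_polyC /=.
rewrite !hornerE /=.
by [].
Qed.

From mathcomp Require Import lra zify.

Theorem proposition8p5 (a b c : nat) (ha : (0 < a)%N) (hb : (0 < b)%N)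
    (hc : (0 < c)%N) :
  (forall z : algC,
      root (alexander_polyC [:: 2 * a%:Z; 2 * b%:Z; - (2 * c%:Z)]) z ->
      z \is Num.real)
  <-> (c <= a)%N.
Proof.
set d : algC := a%:R - c%:R.
set k : algC := (a * b * c)%:R.
have kpos : 0 < k by rewrite /k ltr0n !muln_gt0 ha hb hc.
have k0 : k != 0 by rewrite gt_eqF.
have dR : d \is Num.real by rewrite /d rpredB // realn.
have kR : k \is Num.real by rewrite realn.
have D4 : 0 < 4 * k + d.
  rewrite /d /k -natrM addrA -natrD subr_gt0 ltr_nat.
  have : (1 <= a * b)%N by rewrite muln_gt0 ha hb.
  move: hc; clear; nia.
set D := d * (4 * k + d).
set w := sqrtC D.
have wD : w ^+ 2 = D by rewrite sqrtCK.
have key : forall z, root (alexander_polyC [:: 2 * a%:Z; 2 * b%:Z; - (2 * c%:Z)]) z =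
   ((z - 1) * (d * z - k * (z - 1) ^+ 2) == 0).
  move=> z; rewrite rootE /d /k !natrM; congr (_ == 0); ring.
split.
- move=> H; rewrite leqNgt; apply/negP => ltac.
  have dneg : d < 0 by rewrite /d subr_lt0 ltr_nat.
  have Dneg : D < 0 by rewrite /D nmulr_rlt0.
  set z := 1 + (d + w) / (2 * k).
  have : root (alexander_polyC [:: 2 * a%:Z; 2 * b%:Z; - (2 * c%:Z)]) z.
    rewrite key; apply/eqP.
    have -> : d * z - k * (z - 1) ^+ 2 = (D - w ^+ 2) / (4 * k).
      rewrite /z /D; field; rewrite ?pnatr_eq0 -?lt0n ?ha ?hb ?hc ?mulf_neq0 //.
    by rewrite wD subrr mul0r mulr0.
  move/H => zR.
  have wR : w \is Num.real.
    have -> : w = 2 * k * (z - 1) - d by rewrite /z; field; rewrite ?pnatr_eq0 -?lt0n ?ha ?hb ?hc ?mulf_neq0 //.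
    by clearbody z; rewrite !(rpredB, rpredM) ?realn ?rpred1.
  have := real_exprn_even_ge0 (n:=2) wR isT.
  rewrite wD => h; have := le_lt_trans h Dneg; by rewrite ltxx.
- move=> lec z; rewrite key mulf_eq0 => /orP [/eqP z1| ].
    by have -> : z = 1 by apply/eqP; rewrite -subr_eq0 z1.
  have dge : 0 <= d by rewrite /d subr_ge0 ler_nat.
  have wR : w \is Num.real by apply: ger0_real; rewrite sqrtC_ge0 mulr_ge0 // ltW.
  have -> : d * z - k * (z - 1) ^+ 2 =
     - k * ((z - 1 - (d + w) / (2 * k)) * (z - 1 - (d - w) / (2 * k))).
    have -> : d * z - k * (z - 1) ^+ 2 = d * z - k * (z - 1) ^+ 2 + (w ^+ 2 - D) / (4 * k).
      by rewrite wD subrr mul0r addr0.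
    rewrite /D; field; rewrite ?pnatr_eq0 -?lt0n ?ha ?hb ?hc ?mulf_neq0 //.
  rewrite mulf_eq0 oppr_eq0 (negbTE k0) /= mulf_eq0 => /orP []; rewrite subr_eq0 => /eqP h.
    have -> : z = 1 + (d + w) / (2 * k) by rewrite -h; ring.
    by rewrite !(rpredB, rpredM, rpredD, rpredV) ?realn ?rpred1.
  have -> : z = 1 + (d - w) / (2 * k) by rewrite -h; ring.
  by rewrite !(rpredB, rpredM, rpredD, rpredV) ?realn ?rpred1.
Qed.
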